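(* Let $H=\left(\frac{3,-1}{\mathbb{Q}}\right)$ and let $d>0$ be a square-free integer for which the set $S_d=\{xI+yJ+zK: (x,y,z)\in\mathbb{Z}^3,\ 3x^2-y^2+3z^2=d\}$ is infinite. Let $\varphi_d:\mathbb{N}\to S_d$ be a bijection, and let $a,b>0$ be rational numbers such that $a+b\sqrt{d}$ is a unit of $\mathbb{Q}(\sqrt d)$ of infinite order. Define $\psi_d:\mathbb{N}^2\to H$ by $\psi_d(t,m)=\left(a+b\,\varphi_d(t)\right)^m$. Then the restriction of $\psi_d$ to $\mathbb{N}\times(\mathbb{N}\setminus\{0\})$ is injective.
   Context: $\mathbb{N}=\{0,1,2,\dots\}$. $H=\left(\frac{3,-1}{\mathbb{Q}}\right)$ is the quaternion $\mathbb{Q}$-algebra with basis $1,I,J,K=IJ$ and relations $I^2=3$, $J^2=-1$, $IJ=-JI$; the reduced norm of $x_0+xI+yJ+zK$ is $x_0^2-3x^2+y^2-3z^2$. Elements $xI+yJ+zK$ are called pure quaternions; a pure quaternion $\omega\in S_d$ has reduced norm $-d$ and satisfies $\omega^2=d$. *)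

(* Defs.v *)
From HB Require Import structures.
From mathcomp Require Import all_boot all_order all_algebra all_field.
Set Implicit Arguments. Unset Strict Implicit. Unset Printing Implicit Defensive.
Import Order.TTheory GRing.Theory Num.Theory.
Local Open Scope ring_scope.

(* Elements x0 + x1 I + x2 J + x3 K of H = (3,-1 / Q), as 4-tuples of rationals. *)
Definition quat := (rat * rat * rat * rat)%type.

Definition qalpha : rat := 3.      (* I^2 = 3 *)
Definition qbeta  : rat := -1.     (* J^2 = -1 *)

Definition qone : quat := (1, 0, 0, 0).

(* Multiplication in the quaternion algebra (alpha, beta / Q), K = IJ. *)
Definition qmul (p q : quat) : quat :=
  let: (x0, x1, x2, x3) := p in
  let: (y0, y1, y2, y3) := q in
  (x0 * y0 + qalpha * x1 * y1 + qbeta * x2 * y2 - qalpha * qbeta * x3 * y3,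
   x0 * y1 + x1 * y0 - qbeta * x2 * y3 + qbeta * x3 * y2,
   x0 * y2 + x2 * y0 + qalpha * x1 * y3 - qalpha * x3 * y1,
   x0 * y3 + x3 * y0 + x1 * y2 - x2 * y1).

Fixpoint qpow (q : quat) (m : nat) : quat :=
  match m with
  | O => qone
  | S m' => qmul q (qpow q m')
  end.

Definition in_S (d : nat) (v : int * int * int) : Prop :=
  let: (x, y, z) := v in 3 * x ^+ 2 - y ^+ 2 + 3 * z ^+ 2 = (d%:Z).

Definition S_type (d : nat) := {v : int * int * int | in_S d v}.

Definition squarefree (d : nat) : Prop :=
  forall k : nat, (1 < k)%N -> ~~ (k ^ 2 %| d)%N.

Definition S_infinite (d : nat) : Prop :=
  ~ (exists s : seq (int * int * int), forall v, in_S d v -> v \in s).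

Definition lin_quat (a b : rat) (w : int * int * int) : quat :=
  let: (x, y, z) := w in (a, b * x%:~R, b * y%:~R, b * z%:~R).

Definition psi (d : nat) (phi : nat -> S_type d) (a b : rat) (t m : nat) : quat :=
  qpow (lin_quat a b (sval (phi t))) m.

(* Main.v *)
Require Import Defs.
From HB Require Import structures.
From mathcomp Require Import all_boot all_order all_algebra all_field.
From mathcomp Require Import ring.
Import Order.TTheory GRing.Theory Num.Theory.
Local Open Scope ring_scope.

Fixpoint AB (a b D : rat) (m : nat) : rat * rat :=
  match m with
  | O => (1, 0)
  | S m' => let: (A, B) := AB a b D m' in (a * A + b * D * B, a * B + b * A)
  end.

Lemma qpow_AB (a b D x y z : rat) (m : nat) :
  3 * x ^+ 2 - y ^+ 2 + 3 * z ^+ 2 = D ->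
  qpow (a, b * x, b * y, b * z) m =
  ((AB a b D m).1, (AB a b D m).2 * x, (AB a b D m).2 * y, (AB a b D m).2 * z).
Proof.
move=> hD; elim: m => [|m IH] /=.
  by rewrite /qone !mul0r.
rewrite IH; case: (AB a b D m) => A B /=.
rewrite /qalpha /qbeta -hD; congr (_, _, _, _); ring.
Qed.

Lemma AB_pos (a b D : rat) (m : nat) : 0 < a -> 0 < b -> 0 <= D ->
  0 < (AB a b D m).1 /\ 0 <= (AB a b D m).2 /\ ((0 < m)%N -> 0 < (AB a b D m).2).
Proof.
move=> ha hb hD; elim: m => [|m [h1 [h2 h3]]] /=.
  by rewrite ltr01 lexx.
move: h1 h2 h3; case: (AB a b D m) => A B /= h1 h2 h3.
have p1 : 0 < a * A by rewrite mulr_gt0.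
have p2 : 0 <= b * D * B by rewrite !mulr_ge0 // ltW.
have p3 : 0 <= a * B by rewrite mulr_ge0 // ltW.
have p4 : 0 < b * A by rewrite mulr_gt0.
split; first by rewrite ltr_wpDr.
split; first by rewrite ltW // ltr_wpDl.
by move=> _; rewrite ltr_wpDl.
Qed.

Lemma AB_alg (a b : rat) (d : nat) (m : nat) :
  ratr (AB a b d%:R m).1 + ratr (AB a b d%:R m).2 * sqrtC (d%:R) =
  (ratr a + ratr b * sqrtC (d%:R) : algC) ^+ m.
Proof.
elim: m => [|m IH] /=.
  by rewrite rmorph0 rmorph1 mul0r addr0 expr0.
rewrite exprS -IH; case: (AB a b d%:R m) => A B /=.
have hs : sqrtC (d%:R : algC) ^+ 2 = d%:R by rewrite sqrtCK.
rewrite !rmorphD !rmorphM /= ratr_nat.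
rewrite -[X in ratr a * ratr A + ratr b * X * _]hs. ring.
Qed.

Theorem mainTheorem4 (d : nat) (phi : nat -> S_type d) (a b : rat) :
  (0 < d)%N -> squarefree d -> S_infinite d ->
  bijective phi ->
  0 < a -> 0 < b ->
  (* a + b sqrt d, seen in Q(sqrt d) inside algC, is nonzero of infinite order *)
  (ratr a + ratr b * sqrtC (d%:R) : algC) != 0 ->
  (forall n : nat, (0 < n)%N -> (ratr a + ratr b * sqrtC (d%:R) : algC) ^+ n != 1) ->
  forall t1 t2 m1 m2 : nat, (0 < m1)%N -> (0 < m2)%N ->
    psi phi a b t1 m1 = psi phi a b t2 m2 -> t1 = t2 /\ m1 = m2.
Proof.
move=> d0 _ _ bij ha hb u0 uinf t1 t2 m1 m2 hm1 hm2.
rewrite /psi.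
have hS : forall t, let: (x, y, z) := sval (phi t) in
   3 * (x%:~R : rat) ^+ 2 - (y%:~R) ^+ 2 + 3 * (z%:~R) ^+ 2 = d%:R.
  move=> t; case: (phi t) => [[[x y] z] /= h].
  have -> : (d%:R : rat) = (d%:Z)%:~R by [].
  by rewrite -h !(rmorphD, rmorphN, rmorphM, rmorphXn).
have hD : (0 : rat) <= d%:R by rewrite ler0n.
have hDp : (d%:R : rat) != 0 by rewrite pnatr_eq0 -lt0n.
have := hS t1; have := hS t2.
have inj := bij_inj bij.
case E1: (sval (phi t1)) => [[x1 y1] z1].
case E2: (sval (phi t2)) => [[x2 y2] z2].
move=> h2 h1 /=.
rewrite (qpow_AB a b _ _ _ _ m1 h1) (qpow_AB a b _ _ _ _ m2 h2).
have [_ [_ P1]] := AB_pos a b d%:R m1 ha hb hD.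
have [_ [_ P2]] := AB_pos a b d%:R m2 ha hb hD.
move: (P1 hm1) (P2 hm2).
move: (AB_alg a b d m1) (AB_alg a b d m2).
case: (AB a b d%:R m1) => A1 B1; case: (AB a b d%:R m2) => A2 B2 /=.
move=> U1 U2 pB1 pB2 [eA ex ey ez].
have eB : B1 = B2.
  have : B1 ^+ 2 * d%:R = B2 ^+ 2 * d%:R.
    rewrite -{1}h1 -h2.
    transitivity (3 * (B1 * x1%:~R) ^+ 2 - (B1 * y1%:~R) ^+ 2 + 3 * (B1 * z1%:~R) ^+ 2).
      ring.
    rewrite ex ey ez; ring.
  move/(mulIf hDp)/eqP; rewrite eqrXn2 // ?ltW //; by move/eqP.
subst B2.
have nz : B1 != 0 by rewrite gt_eqF.
have X1 : x1 = x2 by apply/eqP; rewrite -(eqr_int rat); apply/eqP/(mulfI nz).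
have Y1 : y1 = y2 by apply/eqP; rewrite -(eqr_int rat); apply/eqP/(mulfI nz).
have Z1 : z1 = z2 by apply/eqP; rewrite -(eqr_int rat); apply/eqP/(mulfI nz).
split.
  apply: inj; move: E1 E2; case: (phi t1) => v p; case: (phi t2) => w q /= E1 E2.
  subst v w; rewrite X1 Y1 Z1 in p *; congr exist; exact: eq_irrelevance.
set u := (ratr a + ratr b * sqrtC (d%:R) : algC) in U1 U2 u0 uinf.
have eu : u ^+ m1 = u ^+ m2 by rewrite -U1 -U2 eA.
wlog lt : m1 m2 hm1 hm2 eu {U1 U2 eA P1 P2 pB1 pB2} / (m1 <= m2)%N.
  move=> W; case: (leqP m1 m2) => h; first exact: W.
  by symmetry; apply: W => //; apply: ltnW.
apply/eqP; rewrite eqn_leq lt /=; apply/negP => /negP; rewrite -ltnNge => lt2.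
have := uinf (m2 - m1)%N; rewrite subn_gt0 lt2 => /(_ isT); apply/negP; rewrite negbK.
have un : u ^+ m1 != 0 by rewrite expf_neq0.
apply/eqP/(mulfI un); rewrite -exprD subnKC // mulr1 eu //.
Qed.
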